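(* For the full-order LQO system $G$ and the reduced-order LQO system $G_k$ described in the context, the squared frequency-limited $\mathcal{H}_2$ norm of the error satisfies $$\|G-G_k\|_{\mathcal{H}_{2,\omega}}^2=\|G\|_{\mathcal{H}_{2,\omega}}^2-2\langle G,G_k\rangle_{\mathcal{H}_{2,\omega}}+\|G_k\|_{\mathcal{H}_{2,\omega}}^2,$$ where the $\mathcal{H}_{2,\omega}$ inner product equals $\langle G,G_k\rangle_{\mathcal{H}_{2,\omega}}=\operatorname{trace}\big(B^T(Y_{12,\omega}+Z_{12,\omega})B_k\big)=\operatorname{trace}(B^TQ_{12,\omega}B_k)$.
   Context: Consider the linear quadratic output (LQO) system $G$: $\dot x(t)=Ax(t)+Bu(t)$, $y(t)=Cx(t)+[x(t)^TM_1x(t);\dots;x(t)^TM_px(t)]$ with $A\in\mathbb{R}^{n\times n}$ Hurwitz, $B\in\mathbb{R}^{n\times m}$, $C\in\mathbb{R}^{p\times n}$, $M_i=M_i^T\in\mathbb{R}^{n\times n}$, and a reduced-order LQO system $G_k$ with realization $(A_k,B_k,C_k,M_{k,1},\dots,M_{k,p})$ of order $k$, $A_k$ Hurwitz. Their transfer functions are $G_1(s)=C(sI-A)^{-1}B$, $G_{2,i}(s_1,s_2)=B^T(s_1I-A)^{-*}M_i(s_2I-A)^{-1}B$, and analogously $G_{k,1}$, $G_{k,2,i}$ with the reduced matrices. The frequency-limited $\mathcal{H}_2$ norm on $[0,\omega]$ rad/sec is given by $\|G\|_{\mathcal{H}_{2,\omega}}^2=\operatorname{trace}\Big(\frac{1}{2\pi}\int_{-\omega}^{\omega}G_1^*(j\nu)G_1(j\nu)d\nu+\frac{1}{(2\pi)^2}\int_{-\omega}^{\omega}\int_{-\omega}^{\omega}\sum_{i=1}^pG_{2,i}^*(j\nu_1,j\nu_2)G_{2,i}(j\nu_1,j\nu_2)d\nu_1d\nu_2\Big)$,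 and the $\mathcal{H}_{2,\omega}$ inner product is $\langle G,G_k\rangle_{\mathcal{H}_{2,\omega}}=\frac{1}{2\pi}\int_{-\omega}^{\omega}\operatorname{trace}\big(G_1^*(j\nu)G_{k,1}(j\nu)\big)d\nu+\frac{1}{4\pi^2}\operatorname{trace}\Big(\int_{-\omega}^{\omega}\int_{-\omega}^{\omega}\sum_{i=1}^pG_{2,i}^*(j\nu_1,j\nu_2)G_{k,2,i}(j\nu_1,j\nu_2)d\nu_1d\nu_2\Big)$. Let $F_\omega=\frac{1}{2\pi}\int_{-\omega}^{\omega}(j\nu I-A)^{-1}d\nu$ and $F_{k,\omega}=\frac{1}{2\pi}\int_{-\omega}^{\omega}(j\nu I-A_k)^{-1}d\nu$. Let $P_{12,\omega}$ solve $AP_{12,\omega}+P_{12,\omega}A_k^T+F_\omega BB_k^T+BB_k^TF_{k,\omega}^*=0$, $Y_{12,\omega}$ solve $A^TY_{12,\omega}+Y_{12,\omega}A_k+F_\omega^*C^TC_k+C^TC_kF_{k,\omega}=0$, $Z_{12,\omega}$ solve $A^TZ_{12,\omega}+Z_{12,\omega}A_k+\sum_{i=1}^p(F_\omega^*M_iP_{12,\omega}M_{k,i}+M_iP_{12,\omega}M_{k,i}F_{k,\omega})=0$, and $Q_{12,\omega}=Y_{12,\omega}+Z_{12,\omega}$. Equivalently $Y_{12,\omega}=\frac{1}{2\pi}\int_{-\omega}^{\omega}(j\nu I-A)^{-*}C^TC_k(j\nu I-A_k)^{-1}d\nu$ and $Z_{12,\omega}$ is the analogous double integral involving $\sum_i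 M_i(\cdot)M_{k,i}$. *)

(* Defs.v *)
From HB Require Import structures.
From mathcomp Require Import all_boot all_order all_algebra.
From mathcomp Require Import all_classical all_reals all_analysis.
From mathcomp Require Import complex.

Set Implicit Arguments.
Unset Strict Implicit.
Unset Printing Implicit Defensive.

Import Order.TTheory GRing.Theory Num.Theory.
Local Open Scope ring_scope.
Local Open Scope complex_scope.
Local Open Scope classical_set_scope.

Section LQO.
Variable R : realType.
Local Notation C := (R[i]).

Definition cmx (a b : nat) (A : 'M[R]_(a, b)) : 'M[C]_(a, b) :=
  map_mx (fun x : R => x%:C) A.

Definition ctr (a b : nat) (M : 'M[C]_(a, b)) : 'M[C]_(b, a) :=
  map_mx conjc M^T.

Definition jw (nu : R) : C := Complex 0 nu.

Definition resolvent (a : nat) (A : 'M[R]_a) (s : C) : 'M[C]_a :=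
  invmx (s%:M - cmx A).

Definition cintegral (w : R) (f : R -> C) : C :=
  (Rintegral lebesgue_measure `[- w, w]%classic (fun x => complex.Re (f x)))%:C
  + 'i * (Rintegral lebesgue_measure `[- w, w]%classic (fun x => complex.Im (f x)))%:C.

Definition cintegral2 (w : R) (f : R -> R -> C) : C :=
  cintegral w (fun x1 => cintegral w (fun x2 => f x1 x2)).

Definition mxintegral (w : R) (a b : nat) (F : R -> 'M[C]_(a, b)) : 'M[C]_(a, b) :=
  \matrix_(i, j) cintegral w (fun x => F x i j).

Definition mxintegral2 (w : R) (a b : nat) (F : R -> R -> 'M[C]_(a, b))
  : 'M[C]_(a, b) :=
  \matrix_(i, j) cintegral2 w (fun x1 x2 => F x1 x2 i j).

Definition hurwitz (a : nat) (A : 'M[R]_a) : Prop :=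
  forall l : C, eigenvalue (cmx A) l -> complex.Re l < 0.

Definition tf1 (a m p : nat) (A : 'M[R]_a) (B : 'M[R]_(a, m)) (Cm : 'M[R]_(p, a))
  (s : C) : 'M[C]_(p, m) :=
  cmx Cm *m resolvent A s *m cmx B.

Definition tf2 (a m p : nat) (A : 'M[R]_a) (B : 'M[R]_(a, m)) (M : 'I_p -> 'M[R]_a)
  (i : 'I_p) (s1 s2 : C) : 'M[C]_m :=
  cmx B^T *m ctr (resolvent A s1) *m cmx (M i) *m resolvent A s2 *m cmx B.

(** Squared frequency-limited H2 norm, expressed on the transfer functions
    evaluated on the imaginary axis: H1 nu = G_1(j nu),
    H2 i nu1 nu2 = G_{2,i}(j nu1, j nu2). *)
Definition h2w_norm2 (w : R) (m p : nat) (H1 : R -> 'M[C]_(p, m))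
  (H2 : 'I_p -> R -> R -> 'M[C]_m) : C :=
  \tr ( ((2 * pi)^-1)%:C *: mxintegral w (fun nu => ctr (H1 nu) *m H1 nu)
      + (((2 * pi) ^+ 2)^-1)%:C *:
          mxintegral2 w (fun nu1 nu2 =>
             \sum_(i < p) ctr (H2 i nu1 nu2) *m H2 i nu1 nu2)).

Definition h2w_inner (w : R) (m p : nat)
  (H1 K1 : R -> 'M[C]_(p, m)) (H2 K2 : 'I_p -> R -> R -> 'M[C]_m) : C :=
  ((2 * pi)^-1)%:C * cintegral w (fun nu => \tr (ctr (H1 nu) *m K1 nu))
  + (((2 * pi) ^+ 2)^-1)%:C *
      \tr (mxintegral2 w (fun nu1 nu2 =>
             \sum_(i < p) ctr (H2 i nu1 nu2) *m K2 i nu1 nu2)).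

Definition Fw (w : R) (a : nat) (A : 'M[R]_a) : 'M[C]_a :=
  ((2 * pi)^-1)%:C *: mxintegral w (fun nu => resolvent A (jw nu)).

End LQO.

(* Main.v *)
Require Import Defs.
From HB Require Import structures.
From mathcomp Require Import all_boot all_order all_algebra.
From mathcomp Require Import all_classical all_reals all_analysis.
From mathcomp Require Import complex.
Set Implicit Arguments.
Unset Strict Implicit.
Unset Printing Implicit Defensive.
Import Order.TTheory GRing.Theory Num.Theory.
Import numFieldNormedType.Exports.
Local Open Scope ring_scope.
Local Open Scope complex_scope.

Section CC.
Variable R : realType.
Local Notation C := (R[i]).

Definition cc (f : R -> C) :=
  continuous (fun x : R => complex.Re (f x)) /\ continuous (fun x : R => complex.Im (f x)).

Lemma cc_ext f g : (forall x, f x = g x) -> cc f -> cc g.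
Proof. by move=> e; have -> : g = f by apply: funext => x; rewrite e. Qed.

Lemma cc_cst (c : C) : cc (fun=> c).
Proof. by split; apply: cst_continuous. Qed.

Lemma ReD (a b : C) : complex.Re (a + b) = complex.Re a + complex.Re b.
Proof. by case: a; case: b. Qed.
Lemma ImD (a b : C) : complex.Im (a + b) = complex.Im a + complex.Im b.
Proof. by case: a; case: b. Qed.
Lemma ReN (a : C) : complex.Re (- a) = - complex.Re a.
Proof. by case: a. Qed.
Lemma ImN (a : C) : complex.Im (- a) = - complex.Im a.
Proof. by case: a. Qed.
Lemma ReM (a b : C) : complex.Re (a * b) = complex.Re a * complex.Re b - complex.Im a * complex.Im b.
Proof. by case: a => ? ?; case: b. Qed.
Lemma ImM (a b : C) : complex.Im (a * b) = complex.Re a * complex.Im b + complex.Im a * complex.Re b.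
Proof. by case: a => ? ?; case: b. Qed.
Lemma ReV (a : C) : complex.Re (a^-1) = complex.Re a / (complex.Re a ^+ 2 + complex.Im a ^+ 2).
Proof. by case: a. Qed.
Lemma ImV (a : C) : complex.Im (a^-1) = - (complex.Im a / (complex.Re a ^+ 2 + complex.Im a ^+ 2)).
Proof. by case: a. Qed.
Lemma Reconj (a : C) : complex.Re (a^*) = complex.Re a.
Proof. by case: a. Qed.
Lemma Imconj (a : C) : complex.Im (a^*) = - complex.Im a.
Proof. by case: a. Qed.

Lemma ceq (k h : R -> R) : (forall x, h x = k x) -> continuous k -> continuous h.
Proof. by move=> e; have -> : h = k by apply: funext => x; rewrite e. Qed.

Lemma cD (f g : R -> R) : continuous f -> continuous g -> continuous (fun x => f x + g x).
Proof. by move=> cf cg x; exact: (@continuousD _ _ _ f g x (cf x) (cg x)). Qed.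
Lemma cN (f : R -> R) : continuous f -> continuous (fun x => - f x).
Proof. by move=> cf x; exact: (@continuousN _ _ _ f x (cf x)). Qed.
Lemma cB (f g : R -> R) : continuous f -> continuous g -> continuous (fun x => f x - g x).
Proof. by move=> cf cg; apply: cD => //; exact: cN. Qed.
Lemma cM (f g : R -> R) : continuous f -> continuous g -> continuous (fun x => f x * g x).
Proof. by move=> cf cg x; exact: (@continuousM _ _ f g x (cf x) (cg x)). Qed.
Lemma cV (f : R -> R) : (forall x, f x != 0) -> continuous f -> continuous (fun x => (f x)^-1).
Proof. by move=> nz cf x; exact: (@continuousV _ _ f x (nz x) (cf x)). Qed.

Lemma cc_add f g : cc f -> cc g -> cc (fun x => f x + g x).
Proof.
move=> [f1 f2] [g1 g2]; split.
  apply: (ceq (k := fun x => complex.Re (f x) + complex.Re (g x))) => [x|]; first by rewrite ReD.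
  exact: cD.
apply: (ceq (k := fun x => complex.Im (f x) + complex.Im (g x))) => [x|]; first by rewrite ImD.
exact: cD.
Qed.

Lemma cc_opp f : cc f -> cc (fun x => - f x).
Proof.
move=> [f1 f2]; split.
  apply: (ceq (k := fun x => - complex.Re (f x))) => [x|]; first by rewrite ReN.
  exact: cN.
apply: (ceq (k := fun x => - complex.Im (f x))) => [x|]; first by rewrite ImN.
exact: cN.
Qed.

Lemma cc_sub f g : cc f -> cc g -> cc (fun x => f x - g x).
Proof. by move=> cf cg; apply: cc_add => //; exact: cc_opp. Qed.

Lemma cc_mul f g : cc f -> cc g -> cc (fun x => f x * g x).
Proof.
move=> [f1 f2] [g1 g2]; split.
  apply: (ceq (k := fun x => complex.Re (f x) * complex.Re (g x) - complex.Im (f x) * complex.Im (g x))) => [x|]; first by rewrite ReM.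
  apply: cB; exact: cM.
apply: (ceq (k := fun x => complex.Re (f x) * complex.Im (g x) + complex.Im (f x) * complex.Re (g x))) => [x|]; first by rewrite ImM.
apply: cD; exact: cM.
Qed.

Lemma cc_conj f : cc f -> cc (fun x => (f x)^*).
Proof.
move=> [f1 f2]; split.
  by apply: (ceq (k := fun x => complex.Re (f x))) => // x; rewrite Reconj.
apply: (ceq (k := fun x => - complex.Im (f x))) => [x|]; first by rewrite Imconj.
exact: cN.
Qed.

Lemma cc_inv f : cc f -> (forall x, f x != 0) -> cc (fun x => (f x)^-1).
Proof.
move=> [f1 f2] nz.
have dnz x : complex.Re (f x) ^+ 2 + complex.Im (f x) ^+ 2 != 0.
  move: (nz x); case: (f x) => a b /=; apply: contra => /eqP H.
  have a0 : a = 0.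
    apply/eqP; rewrite -sqrf_eq0 eq_le sqr_ge0 andbT -H lerDl sqr_ge0 //.
  have b0 : b = 0 by apply/eqP; rewrite -sqrf_eq0 -H a0 expr0n add0r.
  by rewrite a0 b0.
have cd : continuous (fun x => complex.Re (f x) ^+ 2 + complex.Im (f x) ^+ 2).
  apply: cD; rewrite /GRing.exp /=; exact: cM.
split.
  apply: (ceq (k := fun x => complex.Re (f x) * (complex.Re (f x) ^+ 2 + complex.Im (f x) ^+ 2)^-1)) => [x|]; first by rewrite ReV.
  apply: cM => //; exact: cV.
apply: (ceq (k := fun x => - (complex.Im (f x) * (complex.Re (f x) ^+ 2 + complex.Im (f x) ^+ 2)^-1))) => [x|]; first by rewrite ImV.
apply: cN; apply: cM => //; exact: cV.
Qed.

Lemma cc_sum I (r : seq I) (P : pred I) (f : I -> R -> C) :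
  (forall i, P i -> cc (f i)) -> cc (fun x => \sum_(i <- r | P i) f i x).
Proof.
move=> H; elim: r => [|a r IH].
  apply: (cc_ext (f := fun=> 0)); [by move=> x; rewrite big_nil | exact: cc_cst].
case Pa: (P a).
  apply: (cc_ext (f := fun x => f a x + \sum_(i <- r | P i) f i x)).
    by move=> x; rewrite big_cons Pa.
  by apply: cc_add => //; exact: H.
by apply: (cc_ext (f := fun x => \sum_(i <- r | P i) f i x)) => // x; rewrite big_cons Pa.
Qed.

Lemma cc_prod I (r : seq I) (P : pred I) (f : I -> R -> C) :
  (forall i, P i -> cc (f i)) -> cc (fun x => \prod_(i <- r | P i) f i x).
Proof.
move=> H; elim: r => [|a r IH].
  apply: (cc_ext (f := fun=> 1)); [by move=> x; rewrite big_nil | exact: cc_cst].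
case Pa: (P a).
  apply: (cc_ext (f := fun x => f a x * \prod_(i <- r | P i) f i x)).
    by move=> x; rewrite big_cons Pa.
  by apply: cc_mul => //; exact: H.
by apply: (cc_ext (f := fun x => \prod_(i <- r | P i) f i x)) => // x; rewrite big_cons Pa.
Qed.

Lemma cc_jw : cc (fun x => jw x).
Proof. by split => x /=; [exact: cst_continuous | exact: cvg_id]. Qed.

Lemma cO (f : R -> R) : continuous f -> continuous (fun x => f (- x)).
Proof.
move=> cf x.
exact: (@continuous_comp R R R (-%R) f x (@oppr_continuous R R x) (cf (- x))).
Qed.

Lemma cc_oppx f : cc f -> cc (fun x => f (- x)).
Proof. by move=> [f1 f2]; split; apply: (cO (f := fun x => _ (f x))). Qed.

End CC.

Section CI.
Variable R : realType.
Local Notation C := (R[i]).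
Variable w : R.

Definition RI (f : R -> R) := Rintegral lebesgue_measure `[- w, w]%classic f.

Lemma cont_int (f : R -> R) : continuous f ->
  lebesgue_measure.-integrable `[- w, w]%classic (EFin \o f).
Proof.
move=> cf; apply: continuous_compact_integrable; first exact: segment_compact.
exact: continuous_subspaceT.
Qed.

Lemma RI_add (f g : R -> R) : continuous f -> continuous g ->
  RI (fun x => f x + g x) = RI f + RI g.
Proof. by move=> cf cg; rewrite /RI RintegralD //; apply: cont_int. Qed.

Lemma RI_scale (c : R) (f : R -> R) : continuous f ->
  RI (fun x => c * f x) = c * RI f.
Proof. by move=> cf; rewrite /RI RintegralZl //; apply: cont_int. Qed.

Lemma RI_opp (f : R -> R) : continuous f -> RI (fun x => - f x) = - RI f.
Proof.
move=> cf; rewrite -mulN1r -RI_scale //; rewrite /RI.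
by apply: eq_Rintegral => x _; rewrite mulN1r.
Qed.

Lemma RI_ext (f g : R -> R) : (forall x, f x = g x) -> RI f = RI g.
Proof. by move=> e; rewrite /RI; apply: eq_Rintegral => x _; rewrite e. Qed.

Lemma RI_refl (f : R -> R) : - w <= w -> continuous f -> RI (fun x => f (- x)) = RI f.
Proof.
move=> ww cf; rewrite /RI /Rintegral.
have := @integration_by_substitution_oppr R f (- w) w ww (@continuous_subspaceT _ _ `[- w, - - w]%classic f cf).
by rewrite opprK => ->.
Qed.

Lemma cintE (f : R -> C) :
  cintegral w f = Complex (RI (fun x => complex.Re (f x))) (RI (fun x => complex.Im (f x))).
Proof.
rewrite /cintegral -/(RI _) -/(RI _).
apply/eqP; rewrite eq_complex /= !(mul0r, mul1r, add0r, subr0, addr0); apply/andP; split; apply/eqP; reflexivity.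
Qed.

Lemma cint_ext f g : (forall x, f x = g x) -> cintegral w f = cintegral w g.
Proof. by move=> e; have -> : f = g by apply: funext. Qed.

Lemma cint_add f g : cc f -> cc g ->
  cintegral w (fun x => f x + g x) = cintegral w f + cintegral w g.
Proof.
move=> [f1 f2] [g1 g2]; rewrite !cintE.
apply/eqP; rewrite eq_complex /=; apply/andP; split; apply/eqP;
  by rewrite -RI_add //; apply: RI_ext => x; rewrite ?ReD ?ImD.
Qed.

Lemma cint_opp f : cc f -> cintegral w (fun x => - f x) = - cintegral w f.
Proof.
move=> [f1 f2]; rewrite !cintE.
apply/eqP; rewrite eq_complex /=; apply/andP; split; apply/eqP;
  by rewrite -RI_opp //; apply: RI_ext => x; rewrite ?ReN ?ImN.
Qed.

Lemma cint_sub f g : cc f -> cc g ->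
  cintegral w (fun x => f x - g x) = cintegral w f - cintegral w g.
Proof. by move=> cf cg; rewrite cint_add ?cint_opp //; exact: cc_opp. Qed.

Lemma cint_mull (c : C) f : cc f ->
  cintegral w (fun x => c * f x) = c * cintegral w f.
Proof.
move=> [f1 f2]; rewrite !cintE; case: c => a b.
have Hs : forall (u v : R -> R), continuous u -> continuous v ->
   RI (fun x => u x - v x) = RI u - RI v.
  by move=> u v cu cv; rewrite RI_add ?RI_opp //; exact: cN.
have cc1 : forall (c : R) (u : R -> R), continuous u -> continuous (fun x => c * u x).
  by move=> c u cu; apply: cM => //; exact: cst_continuous.
apply/eqP; rewrite eq_complex /=; apply/andP; split; apply/eqP; rewrite -!RI_scale //.
  rewrite -Hs; try exact: cc1.
  by apply: RI_ext => x; case: (f x).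
rewrite -RI_add; try exact: cc1.
by apply: RI_ext => x; case: (f x).
Qed.

Lemma cint_mulr (c : C) f : cc f ->
  cintegral w (fun x => f x * c) = cintegral w f * c.
Proof. by move=> cf; rewrite mulrC -cint_mull //; apply: cint_ext => x; rewrite mulrC. Qed.

Lemma cint_sum I (r : seq I) (P : pred I) (f : I -> R -> C) :
  (forall i, P i -> cc (f i)) ->
  cintegral w (fun x => \sum_(i <- r | P i) f i x) = \sum_(i <- r | P i) cintegral w (f i).
Proof.
move=> H; elim: r => [|a r IH].
  rewrite big_nil (cint_ext (g := fun x => 0 * 0)); last by move=> x; rewrite big_nil mul0r.
  by rewrite cint_mull ?mul0r //; exact: cc_cst.
rewrite big_cons; case Pa: (P a).
  rewrite (cint_ext (g := fun x => f a x + \sum_(i <- r | P i) f i x)); last first.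
    by move=> x; rewrite big_cons Pa.
  by rewrite cint_add ?IH //; [exact: H | exact: cc_sum].
rewrite -IH; apply: cint_ext => x; by rewrite big_cons Pa.
Qed.

Lemma cint_conj f : cc f -> cintegral w (fun x => (f x)^*) = (cintegral w f)^*.
Proof.
move=> [f1 f2]; rewrite !cintE.
apply/eqP; rewrite eq_complex /=; apply/andP; split; apply/eqP.
  by apply: RI_ext => x; rewrite Reconj.
by rewrite -RI_opp //; apply: RI_ext => x; rewrite Imconj.
Qed.

Lemma cint_refl f : - w <= w -> cc f -> cintegral w (fun x => f (- x)) = cintegral w f.
Proof.
move=> ww [f1 f2]; rewrite !cintE.
by rewrite (RI_refl (f := fun x => complex.Re (f x))) // (RI_refl (f := fun x => complex.Im (f x))).
Qed.

End CI.

Section MC.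
Variable R : realType.
Local Notation C := (R[i]).

Definition mcc a b (F : R -> 'M[C]_(a, b)) := forall i j, cc (fun x => F x i j).
Definition conjm a b (M : 'M[C]_(a, b)) := map_mx conjc M.

Lemma mcc_ext a b (F G : R -> 'M[C]_(a, b)) : (forall x, F x = G x) -> mcc F -> mcc G.
Proof. by move=> e; have -> : G = F by apply: funext => x; rewrite e. Qed.

Lemma mcc_cst a b (M : 'M[C]_(a, b)) : mcc (fun=> M).
Proof. by move=> i j; exact: cc_cst. Qed.

Lemma mcc_add a b (F G : R -> 'M[C]_(a, b)) : mcc F -> mcc G -> mcc (fun x => F x + G x).
Proof. by move=> cF cG i j; apply: (cc_ext (f := fun x => F x i j + G x i j)) => [x|]; [rewrite mxE | exact: cc_add]. Qed.

Lemma mcc_opp a b (F : R -> 'M[C]_(a, b)) : mcc F -> mcc (fun x => - F x).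
Proof. by move=> cF i j; apply: (cc_ext (f := fun x => - F x i j)) => [x|]; [rewrite mxE | exact: cc_opp]. Qed.

Lemma mcc_sub a b (F G : R -> 'M[C]_(a, b)) : mcc F -> mcc G -> mcc (fun x => F x - G x).
Proof. by move=> cF cG; apply: mcc_add => //; exact: mcc_opp. Qed.

Lemma mcc_mul a b c (F : R -> 'M[C]_(a, b)) (G : R -> 'M[C]_(b, c)) :
  mcc F -> mcc G -> mcc (fun x => F x *m G x).
Proof.
move=> cF cG i j; apply: (cc_ext (f := fun x => \sum_k F x i k * G x k j)) => [x|]; first by rewrite mxE.
by apply: cc_sum => k _; exact: cc_mul.
Qed.

Lemma mcc_scale a b (c : R -> C) (F : R -> 'M[C]_(a, b)) : cc c -> mcc F -> mcc (fun x => c x *: F x).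
Proof. by move=> cc0 cF i j; apply: (cc_ext (f := fun x => c x * F x i j)) => [x|]; [rewrite mxE | exact: cc_mul]. Qed.

Lemma mcc_scalar a (c : R -> C) : cc c -> mcc (fun x => (c x)%:M : 'M[C]_a).
Proof.
move=> cc0 i j; apply: (cc_ext (f := fun x => c x * (i == j)%:R)) => [x|]; first by rewrite mxE mulr_natr.
by apply: cc_mul => //; exact: cc_cst.
Qed.

Lemma mcc_ctr a b (F : R -> 'M[C]_(a, b)) : mcc F -> mcc (fun x => ctr (F x)).
Proof. by move=> cF i j; apply: (cc_ext (f := fun x => (F x j i)^*)) => [x|]; [rewrite /ctr !mxE | exact: cc_conj]. Qed.

Lemma mcc_conjm a b (F : R -> 'M[C]_(a, b)) : mcc F -> mcc (fun x => conjm (F x)).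
Proof. by move=> cF i j; apply: (cc_ext (f := fun x => (F x i j)^*)) => [x|]; [rewrite /conjm !mxE | exact: cc_conj]. Qed.

Lemma mcc_tr a (F : R -> 'M[C]_a) : mcc F -> cc (fun x => \tr (F x)).
Proof. by move=> cF; apply: cc_sum => i _; exact: cF. Qed.

Lemma mcc_sum a b I (r : seq I) (P : pred I) (F : I -> R -> 'M[C]_(a, b)) :
  (forall i, P i -> mcc (F i)) -> mcc (fun x => \sum_(i <- r | P i) F i x).
Proof.
move=> H i j; apply: (cc_ext (f := fun x => \sum_(k <- r | P k) F k x i j)) => [x|].
  by rewrite summxE.
by apply: cc_sum => k Pk; exact: H.
Qed.

Lemma mcc_oppx a b (F : R -> 'M[C]_(a, b)) : mcc F -> mcc (fun x => F (- x)).
Proof. by move=> cF i j; exact: (cc_oppx (cF i j)). Qed.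

Lemma mcc_det a (F : R -> 'M[C]_a) : mcc F -> cc (fun x => \det (F x)).
Proof.
move=> cF; rewrite /determinant; apply: cc_sum => s _; apply: cc_mul; first exact: cc_cst.
by apply: cc_prod => i _; exact: cF.
Qed.

Lemma mcc_row' a b (F : R -> 'M[C]_(a.+1, b)) i0 : mcc F -> mcc (fun x => row' i0 (F x)).
Proof. by move=> cF i j; apply: (cc_ext (f := fun x => F x (lift i0 i) j)) => [x|]; [rewrite mxE | exact: cF]. Qed.

Lemma mcc_col' a b (F : R -> 'M[C]_(a, b.+1)) j0 : mcc F -> mcc (fun x => col' j0 (F x)).
Proof. by move=> cF i j; apply: (cc_ext (f := fun x => F x i (lift j0 j))) => [x|]; [rewrite mxE | exact: cF]. Qed.

Lemma mcc_inv a (F : R -> 'M[C]_a) : mcc F -> (forall x, F x \in unitmx) -> mcc (fun x => invmx (F x)).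
Proof.
move=> cF uF; case: a F cF uF => [|a] F cF uF i j; first by case: i.
apply: (cc_ext (f := fun x => (\det (F x))^-1 * cofactor (F x) j i)) => [x|].
  by rewrite /invmx uF mxE mxE.
apply: cc_mul.
  apply: cc_inv; first exact: mcc_det.
  by move=> x; rewrite -unitfE -unitmxE.
apply: cc_mul; first exact: cc_cst.
by apply: mcc_det; apply: mcc_row'; exact: mcc_col'.
Qed.

End MC.

Section MI.
Variable R : realType.
Local Notation C := (R[i]).
Variable w : R.

Lemma mxint_ext a b (F G : R -> 'M[C]_(a, b)) : (forall x, F x = G x) ->
  mxintegral w F = mxintegral w G.
Proof. by move=> e; have -> : F = G by apply: funext. Qed.

Lemma mxint_add a b (F G : R -> 'M[C]_(a, b)) : mcc F -> mcc G ->
  mxintegral w (fun x => F x + G x) = mxintegral w F + mxintegral w G.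
Proof.
move=> cF cG; apply/matrixP => i j; rewrite !mxE -cint_add //.
by apply: cint_ext => x; rewrite mxE.
Qed.

Lemma mxint_opp a b (F : R -> 'M[C]_(a, b)) : mcc F ->
  mxintegral w (fun x => - F x) = - mxintegral w F.
Proof.
move=> cF; apply/matrixP => i j; rewrite !mxE -cint_opp //.
by apply: cint_ext => x; rewrite mxE.
Qed.

Lemma mxint_sub a b (F G : R -> 'M[C]_(a, b)) : mcc F -> mcc G ->
  mxintegral w (fun x => F x - G x) = mxintegral w F - mxintegral w G.
Proof. by move=> cF cG; rewrite mxint_add ?mxint_opp //; exact: mcc_opp. Qed.

Lemma mxint_mull a b c (L : 'M[C]_(a, b)) (F : R -> 'M[C]_(b, c)) : mcc F ->
  mxintegral w (fun x => L *m F x) = L *m mxintegral w F.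
Proof.
move=> cF; apply/matrixP => i j; rewrite !mxE.
rewrite (@cint_ext _ w _ (fun x => \sum_k L i k * F x k j)); last by move=> x; rewrite mxE.
rewrite cint_sum; last by move=> k _; apply: cc_mul => //; exact: cc_cst.
by apply: eq_bigr => k _; rewrite cint_mull // mxE.
Qed.

Lemma mxint_mulr a b c (F : R -> 'M[C]_(a, b)) (L : 'M[C]_(b, c)) : mcc F ->
  mxintegral w (fun x => F x *m L) = mxintegral w F *m L.
Proof.
move=> cF; apply/matrixP => i j; rewrite !mxE.
rewrite (@cint_ext _ w _ (fun x => \sum_k F x i k * L k j)); last by move=> x; rewrite mxE.
rewrite cint_sum; last by move=> k _; apply: cc_mul => //; exact: cc_cst.
by apply: eq_bigr => k _; rewrite cint_mulr // mxE.
Qed.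

Lemma mxint_scale a b (c : C) (F : R -> 'M[C]_(a, b)) : mcc F ->
  mxintegral w (fun x => c *: F x) = c *: mxintegral w F.
Proof.
move=> cF; apply/matrixP => i j; rewrite !mxE -cint_mull //.
by apply: cint_ext => x; rewrite mxE.
Qed.

Lemma mxint_sum a b I (r : seq I) (P : pred I) (F : I -> R -> 'M[C]_(a, b)) :
  (forall i, P i -> mcc (F i)) ->
  mxintegral w (fun x => \sum_(i <- r | P i) F i x) = \sum_(i <- r | P i) mxintegral w (F i).
Proof.
move=> H; apply/matrixP => i j; rewrite !mxE summxE.
rewrite (@cint_ext _ w _ (fun x => \sum_(k <- r | P k) F k x i j)); last by move=> x; rewrite summxE.
rewrite cint_sum; last by move=> k Pk; exact: H.
by apply: eq_bigr => k _; rewrite mxE.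
Qed.

Lemma mxint_ctr a b (F : R -> 'M[C]_(a, b)) : mcc F ->
  mxintegral w (fun x => ctr (F x)) = ctr (mxintegral w F).
Proof.
move=> cF; apply/matrixP => i j; rewrite /ctr !mxE -cint_conj //.
by apply: cint_ext => x; rewrite !mxE.
Qed.

Lemma mxint_conjm a b (F : R -> 'M[C]_(a, b)) : mcc F ->
  mxintegral w (fun x => conjm (F x)) = conjm (mxintegral w F).
Proof.
move=> cF; apply/matrixP => i j; rewrite /conjm !mxE -cint_conj //.
by apply: cint_ext => x; rewrite !mxE.
Qed.

Lemma mxint_refl a b (F : R -> 'M[C]_(a, b)) : - w <= w -> mcc F ->
  mxintegral w (fun x => F (- x)) = mxintegral w F.
Proof. by move=> ww cF; apply/matrixP => i j; rewrite !mxE (cint_refl (f := fun x => F x i j)). Qed.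

Lemma mxint_tr a (F : R -> 'M[C]_a) : mcc F ->
  \tr (mxintegral w F) = cintegral w (fun x => \tr (F x)).
Proof.
move=> cF; rewrite /mxtrace cint_sum; last by move=> i _; exact: cF.
by apply: eq_bigr => i _; rewrite mxE.
Qed.

End MI.

Section D2.
Variable R : realType.
Local Notation C := (R[i]).
Variable w : R.

Definition good2 (f : R -> R -> C) :=
  (forall x1, cc (f x1)) /\ cc (fun x1 => cintegral w (f x1)).

Lemma good2_ext f g : (forall x y, f x y = g x y) -> good2 f -> good2 g.
Proof. by move=> e; have -> : g = f by apply: funext => x; apply: funext => y; rewrite e. Qed.

Lemma cint2_ext f g : (forall x y, f x y = g x y) -> cintegral2 w f = cintegral2 w g.
Proof. by move=> e; have -> : g = f by apply: funext => x; apply: funext => y; rewrite e. Qed.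

Lemma good2_add f g : good2 f -> good2 g -> good2 (fun x y => f x y + g x y).
Proof.
move=> [f1 f2] [g1 g2]; split; first by move=> x; exact: cc_add.
apply: (cc_ext (f := fun x => cintegral w (f x) + cintegral w (g x))); last exact: cc_add.
by move=> x; rewrite cint_add.
Qed.

Lemma cint2_add f g : good2 f -> good2 g ->
  cintegral2 w (fun x y => f x y + g x y) = cintegral2 w f + cintegral2 w g.
Proof.
move=> [f1 f2] [g1 g2]; rewrite /cintegral2 -cint_add //.
by apply: cint_ext => x; rewrite cint_add.
Qed.

Lemma good2_opp f : good2 f -> good2 (fun x y => - f x y).
Proof.
move=> [f1 f2]; split; first by move=> x; exact: cc_opp.
apply: (cc_ext (f := fun x => - cintegral w (f x))); last exact: cc_opp.
by move=> x; rewrite cint_opp.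
Qed.

Lemma cint2_opp f : good2 f -> cintegral2 w (fun x y => - f x y) = - cintegral2 w f.
Proof.
move=> [f1 f2]; rewrite /cintegral2 -cint_opp //.
by apply: cint_ext => x; rewrite cint_opp.
Qed.

Lemma good2_conj f : good2 f -> good2 (fun x y => (f x y)^*).
Proof.
move=> [f1 f2]; split; first by move=> x; exact: cc_conj.
apply: (cc_ext (f := fun x => (cintegral w (f x))^*)); last exact: cc_conj.
by move=> x; rewrite cint_conj.
Qed.

Lemma cint2_conj f : good2 f -> cintegral2 w (fun x y => (f x y)^*) = (cintegral2 w f)^*.
Proof.
move=> [f1 f2]; rewrite /cintegral2 -cint_conj //.
by apply: cint_ext => x; rewrite cint_conj.
Qed.

Lemma good2_sum I (r : seq I) (P : pred I) (f : I -> R -> R -> C) :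
  (forall i, P i -> good2 (f i)) -> good2 (fun x y => \sum_(i <- r | P i) f i x y).
Proof.
move=> H; split.
  by move=> x; apply: cc_sum => i Pi; case: (H i Pi).
apply: (cc_ext (f := fun x => \sum_(i <- r | P i) cintegral w (f i x))).
  by move=> x; rewrite cint_sum // => i Pi; case: (H i Pi).
by apply: cc_sum => i Pi; case: (H i Pi).
Qed.

Lemma cint_sum3 I J K (r1 : seq I) (r2 : seq J) (r3 : seq K) (c : I -> J -> K -> C)
  (g : I -> J -> K -> R -> C) : (forall i j k, cc (g i j k)) ->
  cintegral w (fun x => \sum_(i <- r1) \sum_(j <- r2) \sum_(k <- r3) c i j k * g i j k x)
  = \sum_(i <- r1) \sum_(j <- r2) \sum_(k <- r3) c i j k * cintegral w (g i j k).
Proof.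
move=> H.
have cg : forall i j k, cc (fun x => c i j k * g i j k x).
  by move=> i j k; apply: cc_mul => //; exact: cc_cst.
rewrite cint_sum; last by move=> i _; apply: cc_sum => j _; apply: cc_sum => k _; exact: cg.
apply: eq_bigr => i _; rewrite cint_sum; last by move=> j _; apply: cc_sum => k _; exact: cg.
apply: eq_bigr => j _; rewrite cint_sum; last by move=> k _; exact: cg.
by apply: eq_bigr => k _; rewrite cint_mull.
Qed.

Definition mgood2 a b (F : R -> R -> 'M[C]_(a, b)) :=
  forall i j, good2 (fun x y => F x y i j).

Lemma mxint2E a b (F : R -> R -> 'M[C]_(a, b)) i j :
  mxintegral2 w F i j = cintegral2 w (fun x y => F x y i j).
Proof. by rewrite mxE. Qed.



Local Opaque mxintegral2 mxintegral cintegral2 cintegral.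

Lemma mxint2_ext a b (F G : R -> R -> 'M[C]_(a, b)) : (forall x y, F x y = G x y) ->
  mxintegral2 w F = mxintegral2 w G.
Proof. by move=> e; have -> : G = F by apply: funext => x; apply: funext => y; rewrite e. Qed.

Lemma mgood2_add a b (F G : R -> R -> 'M[C]_(a, b)) : mgood2 F -> mgood2 G ->
  mgood2 (fun x y => F x y + G x y).
Proof.
move=> cF cG i j; apply: (good2_ext (f := fun x y => F x y i j + G x y i j)).
  by move=> x y; rewrite mxE.
exact: good2_add.
Qed.

Lemma mgood2_opp a b (F : R -> R -> 'M[C]_(a, b)) : mgood2 F -> mgood2 (fun x y => - F x y).
Proof.
move=> cF i j; apply: (good2_ext (f := fun x y => - F x y i j)).
  by move=> x y; rewrite mxE.
exact: good2_opp.
Qed.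

Lemma mxint2_add a b (F G : R -> R -> 'M[C]_(a, b)) : mgood2 F -> mgood2 G ->
  mxintegral2 w (fun x y => F x y + G x y) = mxintegral2 w F + mxintegral2 w G.
Proof.
move=> cF cG; apply/matrixP => i j. rewrite mxint2E [in RHS]mxE. rewrite [in RHS]mxint2E [in RHS]mxint2E.
rewrite -(cint2_add (cF i j) (cG i j)); by apply: cint2_ext => x y; rewrite mxE.
Qed.

Lemma mxint2_opp a b (F : R -> R -> 'M[C]_(a, b)) : mgood2 F ->
  mxintegral2 w (fun x y => - F x y) = - mxintegral2 w F.
Proof.
move=> cF; apply/matrixP => i j; rewrite mxint2E mxE mxint2E.
rewrite -(cint2_opp (cF i j)); by apply: cint2_ext => x y; rewrite mxE.
Qed.

Lemma mxint2_ctr a b (F : R -> R -> 'M[C]_(a, b)) : mgood2 F ->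
  mxintegral2 w (fun x y => ctr (F x y)) = ctr (mxintegral2 w F).
Proof.
move=> cF; apply/matrixP => i j; rewrite /ctr mxint2E mxE mxE mxint2E.
rewrite -(cint2_conj (cF j i)); by apply: cint2_ext => x y; rewrite !mxE.
Qed.

End D2.

Section D3.
Variable R : realType.
Local Notation C := (R[i]).
Variable w : R.

Lemma mxint2_sep a b c d p (L : 'I_p -> R -> 'M[C]_(a, c)) (U : R -> 'M[C]_(c, d))
  (K : 'I_p -> R -> 'M[C]_(d, b)) :
  (forall i, mcc (L i)) -> mcc U -> (forall i, mcc (K i)) ->
  mgood2 w (fun x1 x2 => \sum_(i < p) L i x2 *m U x1 *m K i x2) /\
  mxintegral2 w (fun x1 x2 => \sum_(i < p) L i x2 *m U x1 *m K i x2)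
  = mxintegral w (fun x2 => \sum_(i < p) L i x2 *m mxintegral w U *m K i x2).
Proof.
move=> cL cU cK.
have E : forall (V : 'M[C]_(c, d)) x2 a0 b0,
  (\sum_(i < p) L i x2 *m V *m K i x2) a0 b0 =
  \sum_(i < p) \sum_(k < d) \sum_(l < c) V l k * (L i x2 a0 l * K i x2 k b0).
  move=> V x2 a0 b0; rewrite summxE; apply: eq_bigr => i _; rewrite !mxE.
  apply: eq_bigr => k _; rewrite mxE big_distrl; apply: eq_bigr => l _ /=.
  by rewrite mulrAC mulrC.
have cLK : forall i k l a0 b0, cc (fun x2 => L i x2 a0 l * K i x2 k b0).
  by move=> i k l a0 b0; apply: cc_mul; [exact: cL | exact: cK].
have inner : forall x1 a0 b0,
  cintegral w (fun x2 => (\sum_(i < p) L i x2 *m U x1 *m K i x2) a0 b0) =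
  \sum_(i < p) \sum_(k < d) \sum_(l < c) U x1 l k * cintegral w (fun x2 => L i x2 a0 l * K i x2 k b0).
  move=> x1 a0 b0; rewrite (@cint_ext _ w _ (fun x2 => \sum_(i < p) \sum_(k < d) \sum_(l < c)
     U x1 l k * (L i x2 a0 l * K i x2 k b0))); last by move=> x2; rewrite E.
  by rewrite (cint_sum3 w _ _ _ (fun i k l => U x1 l k)
                        (g := fun i k l x2 => L i x2 a0 l * K i x2 k b0)).
have cin : forall a0 b0, cc (fun x1 => \sum_(i < p) \sum_(k < d) \sum_(l < c)
     U x1 l k * cintegral w (fun x2 => L i x2 a0 l * K i x2 k b0)).
  move=> a0 b0; apply: cc_sum => i _; apply: cc_sum => k _; apply: cc_sum => l _.
  by apply: cc_mul; [exact: cU | exact: cc_cst].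
split.
  move=> a0 b0; split.
    move=> x1; apply: (cc_ext (f := fun x2 => \sum_(i < p) \sum_(k < d) \sum_(l < c)
       U x1 l k * (L i x2 a0 l * K i x2 k b0))); first by move=> x2; rewrite E.
    apply: cc_sum => i _; apply: cc_sum => k _; apply: cc_sum => l _.
    by apply: cc_mul; [exact: cc_cst | exact: cLK].
  by apply: (cc_ext _ (cin a0 b0)) => x1; rewrite inner.
apply/matrixP => a0 b0; rewrite !mxE /cintegral2.
rewrite (@cint_ext _ w _ (fun x1 => \sum_(i < p) \sum_(k < d) \sum_(l < c)
     U x1 l k * cintegral w (fun x2 => L i x2 a0 l * K i x2 k b0))); last by move=> x1; rewrite inner.
rewrite (@cint_ext _ w (fun x2 => (\sum_(i < p) L i x2 *m mxintegral w U *m K i x2) a0 b0)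
   (fun x2 => \sum_(i < p) \sum_(k < d) \sum_(l < c)
     mxintegral w U l k * (L i x2 a0 l * K i x2 k b0))); last by move=> x2; rewrite E.
rewrite (cint_sum3 w _ _ _ (fun i k l => mxintegral w U l k)
                   (g := fun i k l x2 => L i x2 a0 l * K i x2 k b0)) //.
rewrite cint_sum; last by move=> i _; apply: cc_sum => k _; apply: cc_sum => l _;
  apply: cc_mul; [exact: cU | exact: cc_cst].
apply: eq_bigr => i _; rewrite cint_sum; last by move=> k _; apply: cc_sum => l _;
  apply: cc_mul; [exact: cU | exact: cc_cst].
apply: eq_bigr => k _; rewrite cint_sum; last by move=> l _;
  apply: cc_mul; [exact: cU | exact: cc_cst].
by apply: eq_bigr => l _; rewrite cint_mulr ?mxE //; exact: cU.
Qed.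

End D3.

Lemma eigen_unit (F : fieldType) n (X : 'M[F]_n) a : eigenvalue X a = (X - a%:M \notin unitmx).
Proof. by rewrite /eigenvalue /eigenspace kermx_eq0 row_free_unit. Qed.

Section SY.
Variable R : realType.
Local Notation C := (R[i]).

Definition hurC n (X : 'M[C]_n) := forall l, eigenvalue X l -> complex.Re l < 0.

Lemma hurC_tr n (X : 'M[C]_n) : hurC X -> hurC X^T.
Proof.
move=> h l; rewrite eigen_unit => H; apply: h; rewrite eigen_unit.
by rewrite -unitmx_tr raddfB /= tr_scalar_mx.
Qed.

Lemma sylv_uniq n k (A1 : 'M[C]_n) (A2 : 'M[C]_k) (D : 'M[C]_(n, k)) :
  hurC A1 -> hurC A2 -> A1 *m D + D *m A2 = 0 -> D = 0.
Proof.
case: n A1 D => [|n] A1 D; first by move=> *; exact: flatmx0.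
case: k A2 D => [|k] A2 D; first by move=> *; exact: thinmx0.
move=> h1 h2 E.
have DA : D *m A2 = (- A1) *m D.
  by apply/eqP; rewrite mulNmx -addr_eq0 addrC E.
have Hp : forall q : {poly C}, D *m horner_mx A2 q = horner_mx (- A1) q *m D.
  elim/poly_ind => [|q c IH]; first by rewrite !rmorph0 mulmx0 mul0mx.
  rewrite !rmorphD !rmorphM /= !horner_mx_X !horner_mx_C -!mulmxE.
  rewrite mulmxDr mulmxDl mulmxA IH -!mulmxA DA.
  by rewrite mul_mx_scalar mul_scalar_mx.
have := Hp (char_poly A2); rewrite Cayley_Hamilton mulmx0 => /esym H0.
have U : horner_mx (- A1) (char_poly A2) \in unitmx.
  have [r Er] := closed_field_poly_normal (char_poly A2).
  have rr : forall z, z \in r -> eigenvalue A2 z.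
    move=> z zr; rewrite eigenvalue_root_char Er rootZ; last first.
      by rewrite (monicP (char_poly_monic A2)) oner_neq0.
    by rewrite root_prod_XsubC.
  rewrite Er (monicP (char_poly_monic A2)) scale1r rmorph_prod big_seq.
  apply: (big_ind (fun M : 'M[C]_n.+1 => M \in unitmx)).
  - exact: unitmx1.
  - by move=> M1 M2 u1 u2; rewrite -mulmxE unitmx_mul u1 u2.
  move=> z zr; rewrite rmorphB /= horner_mx_X horner_mx_C.
  have ez := h2 _ (rr z zr).
  have : ~~ eigenvalue A1 (- z).
    apply/negP => /h1; rewrite ReN.
    by move: ez; case: z {zr} => a b /=; rewrite oppr_lt0 => /lt_trans H /H; rewrite ltxx.
  rewrite eigen_unit negbK => u.
  have -> : - A1 - z%:M = - (A1 - (- z)%:M) by rewrite raddfN /= opprK opprD.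
  by rewrite -scaleN1r unitmxZ // unitfE oppr_eq0 oner_neq0.
by rewrite -[D]mul1mx -(mulVmx U) -mulmxA H0 mulmx0.
Qed.

End SY.

Section RS.
Variable R : realType.
Local Notation C := (R[i]).

Lemma ctr_mul a b c (X : 'M[C]_(a, b)) (Y : 'M[C]_(b, c)) : ctr (X *m Y) = ctr Y *m ctr X.
Proof. by rewrite /ctr trmx_mul map_mxM. Qed.

Lemma ctr_add a b (X Y : 'M[C]_(a, b)) : ctr (X + Y) = ctr X + ctr Y.
Proof. by rewrite /ctr raddfD /= map_mxD. Qed.

Lemma ctr_opp a b (X : 'M[C]_(a, b)) : ctr (- X) = - ctr X.
Proof. by rewrite /ctr raddfN /= map_mxN. Qed.

Lemma ctr_sub a b (X Y : 'M[C]_(a, b)) : ctr (X - Y) = ctr X - ctr Y.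
Proof. by rewrite ctr_add ctr_opp. Qed.

Lemma ctr_scale a b (c : C) (X : 'M[C]_(a, b)) : ctr (c *: X) = c^* *: ctr X.
Proof. by apply/matrixP => i j; rewrite /ctr !mxE rmorphM. Qed.

Lemma ctr_scalar a (c : C) : ctr (c%:M : 'M[C]_a) = (c^*)%:M.
Proof. by rewrite /ctr tr_scalar_mx map_scalar_mx. Qed.

Lemma ctr1 a : ctr (1%:M : 'M[C]_a) = 1%:M.
Proof. by rewrite ctr_scalar rmorph1. Qed.

Lemma ctrK a b (X : 'M[C]_(a, b)) : ctr (ctr X) = X.
Proof. by apply/matrixP => i j; rewrite /ctr !mxE conjcK. Qed.

Lemma ctr_cmx a b (A : 'M[R]_(a, b)) : ctr (cmx A) = cmx A^T.
Proof. by apply/matrixP => i j; rewrite /ctr /cmx !mxE conjc_real. Qed.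

Lemma ctr_sum a b I (r : seq I) (P : pred I) (F : I -> 'M[C]_(a, b)) :
  ctr (\sum_(i <- r | P i) F i) = \sum_(i <- r | P i) ctr (F i).
Proof.
apply/matrixP => i j; rewrite /ctr !mxE !summxE rmorph_sum; apply: eq_bigr => k _.
by rewrite !mxE.
Qed.

Lemma tr_ctr a (X : 'M[C]_a) : \tr (ctr X) = (\tr X)^*.
Proof. by rewrite /mxtrace rmorph_sum; apply: eq_bigr => i _; rewrite /ctr !mxE. Qed.

Lemma cmx_mul a b c (A : 'M[R]_(a, b)) (B : 'M[R]_(b, c)) : cmx (A *m B) = cmx A *m cmx B.
Proof. by rewrite /cmx map_mxM. Qed.

Lemma cmx_tr a b (A : 'M[R]_(a, b)) : cmx A^T = (cmx A)^T.
Proof. by rewrite /cmx map_trmx. Qed.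

Lemma conjm_mul a b c (X : 'M[C]_(a, b)) (Y : 'M[C]_(b, c)) : conjm (X *m Y) = conjm X *m conjm Y.
Proof. by rewrite /conjm map_mxM. Qed.

Lemma conjm_add a b (X Y : 'M[C]_(a, b)) : conjm (X + Y) = conjm X + conjm Y.
Proof. by rewrite /conjm map_mxD. Qed.

Lemma conjm_sum a b I (r : seq I) (P : pred I) (F : I -> 'M[C]_(a, b)) :
  conjm (\sum_(i <- r | P i) F i) = \sum_(i <- r | P i) conjm (F i).
Proof.
apply/matrixP => i j; rewrite /conjm !mxE !summxE rmorph_sum; apply: eq_bigr => k _.
by rewrite !mxE.
Qed.

Lemma conjm_scale a b (c : C) (X : 'M[C]_(a, b)) : conjm (c *: X) = c^* *: conjm X.
Proof. by apply/matrixP => i j; rewrite /conjm !mxE rmorphM. Qed.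

Lemma conjm_cmx a b (A : 'M[R]_(a, b)) : conjm (cmx A) = cmx A.
Proof. by apply/matrixP => i j; rewrite /conjm /cmx !mxE conjc_real. Qed.

Lemma conjm_ctr a b (X : 'M[C]_(a, b)) : conjm (ctr X) = ctr (conjm X).
Proof. by apply/matrixP => i j; rewrite /conjm /ctr !mxE. Qed.

Lemma conjmK a b (X : 'M[C]_(a, b)) : conjm (conjm X) = X.
Proof. by apply/matrixP => i j; rewrite /conjm !mxE conjcK. Qed.

Lemma tr_conjm a (X : 'M[C]_a) : \tr (conjm X) = (\tr X)^*.
Proof. by rewrite /mxtrace rmorph_sum; apply: eq_bigr => i _; rewrite /conjm !mxE. Qed.

Lemma hurC_cmx n (A : 'M[R]_n) : hurwitz A -> hurC (cmx A).
Proof. by []. Qed.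

Lemma unit_res n (A : 'M[R]_n) (s : C) : hurwitz A -> complex.Re s = 0 ->
  s%:M - cmx A \in unitmx.
Proof.
move=> h s0; case E: (s%:M - cmx A \in unitmx) => //.
have : eigenvalue (cmx A) s.
  rewrite eigen_unit -opprB -scaleN1r unitmxZ ?E //.
  by rewrite unitfE oppr_eq0 oner_neq0.
by move/h; rewrite s0 ltxx.
Qed.

Lemma res_left n (A : 'M[R]_n) (s : C) : hurwitz A -> complex.Re s = 0 ->
  cmx A *m resolvent A s = s *: resolvent A s - 1%:M.
Proof.
move=> h s0; have u := unit_res h s0.
have -> : cmx A = s%:M - (s%:M - cmx A) by rewrite opprB addrC subrK.
by rewrite mulmxBl /resolvent mulmxV // mul_scalar_mx.
Qed.

Lemma res_right n (A : 'M[R]_n) (s : C) : hurwitz A -> complex.Re s = 0 ->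
  resolvent A s *m cmx A = s *: resolvent A s - 1%:M.
Proof.
move=> h s0; have u := unit_res h s0.
have -> : cmx A = s%:M - (s%:M - cmx A) by rewrite opprB addrC subrK.
by rewrite mulmxBr /resolvent mulVmx // mul_mx_scalar.
Qed.

Lemma mcc_res n (A : 'M[R]_n) : hurwitz A -> mcc (fun x => resolvent A (jw x)).
Proof.
move=> h; apply: mcc_inv.
  apply: mcc_sub; [apply: mcc_scalar; exact: cc_jw | exact: mcc_cst].
by move=> x; apply: unit_res.
Qed.

Lemma conjm_res n (A : 'M[R]_n) x : conjm (resolvent A (jw x)) = resolvent A (jw (- x)).
Proof.
rewrite /conjm /resolvent map_invmx; congr invmx.
rewrite map_mxB /= -/(conjm _) -/(conjm _) conjm_cmx; congr (_ - _).
by apply/matrixP => i j; rewrite !mxE rmorphMn.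
Qed.

End RS.

Section G.
Variable R : realType.
Local Notation C := (R[i]).
Variable w : R.

Lemma zid (V : zmodType) (a b c d k1 k2 : V) :
  a + b + k1 + k2 - (c + d + k1 + k2) = a - c + (b - d).
Proof. by rewrite [c + d + k1 + k2]addrC addrKA [c + d + k1]addrC addrKA opprD addrACA. Qed.

Lemma sylv_eq n k (A1 : 'M[C]_n) (A2 : 'M[C]_k) (Y1 Y2 K1 K2 : 'M[C]_(n, k)) :
  hurC A1 -> hurC A2 ->
  A1 *m Y1 + Y1 *m A2 + K1 + K2 = 0 -> A1 *m Y2 + Y2 *m A2 + K1 + K2 = 0 -> Y1 = Y2.
Proof.
move=> h1 h2 E1 E2; apply/eqP; rewrite -subr_eq0; apply/eqP.
apply: (sylv_uniq h1 h2).
rewrite mulmxBr mulmxBl.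
have -> : A1 *m Y1 - A1 *m Y2 + (Y1 *m A2 - Y2 *m A2) =
  (A1 *m Y1 + Y1 *m A2 + K1 + K2) - (A1 *m Y2 + Y2 *m A2 + K1 + K2).
  by rewrite zid.
by rewrite E1 E2 subrr.
Qed.

Lemma sylv_gen n k (P : R -> 'M[C]_n) (Q : R -> 'M[C]_k) (A1 : 'M[C]_n) (A2 : 'M[C]_k)
  (X : 'M[C]_(n, k)) (f g : R -> C) (c : C) :
  mcc P -> mcc Q -> (forall x, A1 *m P x = f x *: P x - 1%:M) ->
  (forall x, Q x *m A2 = g x *: Q x - 1%:M) -> (forall x, f x + g x = 0) ->
  A1 *m (c *: mxintegral w (fun x => P x *m X *m Q x))
  + (c *: mxintegral w (fun x => P x *m X *m Q x)) *m A2
  + (c *: mxintegral w P) *m X + X *m (c *: mxintegral w Q) = 0.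
Proof.
move=> cP cQ hP hQ fg.
have cM : mcc (fun x => P x *m X *m Q x).
  by apply: mcc_mul => //; apply: mcc_mul => //; exact: mcc_cst.
have pt : forall x, A1 *m (P x *m X *m Q x) + (P x *m X *m Q x) *m A2
                    = - (X *m Q x + P x *m X).
  move=> x.
  have e1 : A1 *m (P x *m X *m Q x) = f x *: (P x *m X *m Q x) - X *m Q x.
    by rewrite !mulmxA hP !mulmxBl !mul1mx -!scalemxAl.
  have e2 : (P x *m X *m Q x) *m A2 = g x *: (P x *m X *m Q x) - P x *m X.
    by rewrite -!mulmxA hQ !mulmxBr !mulmx1 -!scalemxAr !mulmxA.
  rewrite e1 e2 addrACA -scalerDl fg scale0r add0r opprD //.
have I1 := mxint_mull w A1 cM.
have I2 := mxint_mulr w A2 cM.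
have I3 : mxintegral w (fun x => A1 *m (P x *m X *m Q x) + (P x *m X *m Q x) *m A2)
  = - (X *m mxintegral w Q + mxintegral w P *m X).
  rewrite (@mxint_ext _ w _ _ _ (fun x => - (X *m Q x + P x *m X))) //.
  rewrite mxint_opp; last by apply: mcc_add; apply: mcc_mul => //; exact: mcc_cst.
  rewrite mxint_add; [|apply: mcc_mul => //; exact: mcc_cst..].
  by rewrite mxint_mull // mxint_mulr.
rewrite mxint_add in I3; last first.
- by apply: mcc_mul => //; exact: mcc_cst.
- by apply: mcc_mul => //; exact: mcc_cst.
rewrite I1 I2 in I3.
rewrite -scalemxAr -scalemxAl -scalemxAl -scalemxAr -!scalerDr -!addrA.
by rewrite addrA I3 [X *m _ + _]addrC addNr scaler0.
Qed.

End G.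

From mathcomp Require Import ring.

Section NE.
Variable R : realType.
Local Notation C := (R[i]).
Variable w : R.

Local Opaque mxintegral mxintegral2 cintegral cintegral2.

Definition S2 m p (H K : 'I_p -> R -> R -> 'M[C]_m) :=
  fun x1 x2 => \sum_(i < p) ctr (H i x1 x2) *m K i x1 x2.

Lemma mgood2_ext a b (F G : R -> R -> 'M[C]_(a, b)) :
  (forall x y, F x y = G x y) -> mgood2 w F -> mgood2 w G.
Proof. by move=> e; have -> : G = F by apply: funext => x; apply: funext => y; rewrite e. Qed.

Lemma mgood2_ctr a b (F : R -> R -> 'M[C]_(a, b)) :
  mgood2 w F -> mgood2 w (fun x y => ctr (F x y)).
Proof.
move=> cF i j; apply: (@good2_ext _ w (fun x y => (F x y j i)^*)).
  by move=> x y; rewrite /ctr !mxE.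
exact: good2_conj.
Qed.

Lemma mxint2_sub a b (F G : R -> R -> 'M[C]_(a, b)) : mgood2 w F -> mgood2 w G ->
  mxintegral2 w (fun x y => F x y - G x y) = mxintegral2 w F - mxintegral2 w G.
Proof.
by move=> cF cG; rewrite mxint2_add ?mxint2_opp //; exact: mgood2_opp.
Qed.

Lemma mgood2_sub a b (F G : R -> R -> 'M[C]_(a, b)) : mgood2 w F -> mgood2 w G ->
  mgood2 w (fun x y => F x y - G x y).
Proof. by move=> cF cG; apply: mgood2_add => //; exact: mgood2_opp. Qed.

Lemma mcc_T m p (U V : R -> 'M[C]_(p, m)) : mcc U -> mcc V -> mcc (fun x => ctr (U x) *m V x).
Proof. by move=> cU cV; apply: mcc_mul => //; exact: mcc_ctr. Qed.

Lemma conjcR (x : R) : conjc (x%:C) = x%:C.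
Proof. by apply/eqP; rewrite eq_complex /= oppr0 !eqxx. Qed.

Lemma conj_lin (c1 c2 : R) (x y : C) :
  conjc (c1%:C * x + c2%:C * y) = c1%:C * conjc x + c2%:C * conjc y.
Proof.
case: x => a b; case: y => a' b'; apply/eqP; rewrite eq_complex /=.
by apply/andP; split; apply/eqP; ring.
Qed.

Lemma alg_tr m (c1 c2 : R) (a b d e f h : 'M[C]_m) :
  \tr (c1%:C *: (a - b - (ctr b - d)) + c2%:C *: (e - f - (ctr f - h))) =
  \tr (c1%:C *: a + c2%:C *: e)
  - (c1%:C * \tr b + c2%:C * \tr f + conjc (c1%:C * \tr b + c2%:C * \tr f))
  + \tr (c1%:C *: d + c2%:C *: h).
Proof.
rewrite !mxtraceD !mxtraceZ !mxtraceD !raddfN /= !mxtraceD !raddfN /= !tr_ctr.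
rewrite conj_lin; ring.
Qed.

Lemma norm_expand m p (H1 K1 : R -> 'M[C]_(p, m)) (H2 K2 : 'I_p -> R -> R -> 'M[C]_m) :
  mcc H1 -> mcc K1 -> mgood2 w (S2 H2 H2) -> mgood2 w (S2 H2 K2) -> mgood2 w (S2 K2 K2) ->
  h2w_norm2 w (fun nu => H1 nu - K1 nu) (fun i nu1 nu2 => H2 i nu1 nu2 - K2 i nu1 nu2)
  = h2w_norm2 w H1 H2 - (h2w_inner w H1 K1 H2 K2 + conjc (h2w_inner w H1 K1 H2 K2))
    + h2w_norm2 w K1 K2.
Proof.
move=> cH cK gHH gHK gKK.
have eKH : forall x y, ctr (S2 H2 K2 x y) = S2 K2 H2 x y.
  by move=> x y; rewrite /S2 ctr_sum; apply: eq_bigr => i _; rewrite ctr_mul ctrK.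
have gKH : mgood2 w (S2 K2 H2) by apply: (mgood2_ext eKH); exact: mgood2_ctr.
have cHK := mcc_T cH cK.
have E1 : mxintegral w (fun x => ctr (H1 x - K1 x) *m (H1 x - K1 x)) =
  mxintegral w (fun x => ctr (H1 x) *m H1 x) - mxintegral w (fun x => ctr (H1 x) *m K1 x)
  - (ctr (mxintegral w (fun x => ctr (H1 x) *m K1 x)) - mxintegral w (fun x => ctr (K1 x) *m K1 x)).
  rewrite (@mxint_ext _ w _ _ _ (fun x => (ctr (H1 x) *m H1 x - ctr (H1 x) *m K1 x)
            - (ctr (ctr (H1 x) *m K1 x) - ctr (K1 x) *m K1 x))); last first.
    by move=> x; rewrite ctr_sub mulmxBl !mulmxBr ctr_mul ctrK.
  rewrite (@mxint_sub _ w _ _ (fun x => ctr (H1 x) *m H1 x - ctr (H1 x) *m K1 x)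
            (fun x => ctr (ctr (H1 x) *m K1 x) - ctr (K1 x) *m K1 x)); last 2 first.
  - by apply: mcc_sub; apply: mcc_T.
  - by apply: mcc_sub; [exact: mcc_ctr | exact: mcc_T].
  rewrite (@mxint_sub _ w _ _ (fun x => ctr (H1 x) *m H1 x) (fun x => ctr (H1 x) *m K1 x)); [|by apply: mcc_T..].
  rewrite (@mxint_sub _ w _ _ (fun x => ctr (ctr (H1 x) *m K1 x)) (fun x => ctr (K1 x) *m K1 x)); last 2 first.
  - exact: mcc_ctr.
  - exact: mcc_T.
  by rewrite (@mxint_ctr _ w _ _ (fun x => ctr (H1 x) *m K1 x)).
have gKH' : mgood2 w (fun x y => ctr (S2 H2 K2 x y)) by exact: mgood2_ctr.
have E2 : mxintegral2 w (fun x y => \sum_(i < p) ctr (H2 i x y - K2 i x y) *m (H2 i x y - K2 i x y)) =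
  mxintegral2 w (S2 H2 H2) - mxintegral2 w (S2 H2 K2)
  - (ctr (mxintegral2 w (S2 H2 K2)) - mxintegral2 w (S2 K2 K2)).
  rewrite (@mxint2_ext _ w _ _ _ (fun x y => (S2 H2 H2 x y - S2 H2 K2 x y)
            - (ctr (S2 H2 K2 x y) - S2 K2 K2 x y))); last first.
    move=> x y; rewrite eKH /S2 -!sumrB; apply: eq_bigr => i _.
    by rewrite ctr_sub mulmxBl !mulmxBr.
  rewrite (@mxint2_sub _ _ (fun x y => S2 H2 H2 x y - S2 H2 K2 x y)
            (fun x y => ctr (S2 H2 K2 x y) - S2 K2 K2 x y)); last 2 first.
  - exact: (mgood2_sub gHH gHK).
  - exact: (mgood2_sub gKH' gKK).
  rewrite (@mxint2_sub _ _ _ _ gHH gHK).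
  rewrite (@mxint2_sub _ _ _ _ gKH' gKK).
  by rewrite (@mxint2_ctr _ w _ _ _ gHK).
rewrite /h2w_norm2 E1 E2 /h2w_inner -mxint_tr; last exact: mcc_T.
rewrite /S2; exact: alg_tr.
Qed.

Lemma conjm_scaleR a b (c : R) (X : 'M[C]_(a, b)) : conjm (c%:C *: X) = c%:C *: conjm X.
Proof.
apply/matrixP => i j; rewrite /conjm !mxE; case: (X i j) => u v.
by apply/eqP; rewrite eq_complex /=; apply/andP; split; apply/eqP; ring.
Qed.

Lemma conjm_int3 n k (P : R -> 'M[C]_n) (Q : R -> 'M[C]_k) (X : 'M[C]_(n, k)) (c : R) :
  - w <= w -> mcc P -> mcc Q ->
  (forall x, conjm (P x) = P (- x)) -> (forall x, conjm (Q x) = Q (- x)) -> conjm X = X ->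
  conjm (c%:C *: mxintegral w (fun x => P x *m X *m Q x))
  = c%:C *: mxintegral w (fun x => P x *m X *m Q x).
Proof.
move=> ww cP cQ hP hQ hX.
have cM : mcc (fun x => P x *m X *m Q x).
  by apply: mcc_mul => //; apply: mcc_mul => //; exact: mcc_cst.
rewrite conjm_scaleR -mxint_conjm //; congr (_ *: _).
rewrite (@mxint_ext _ w _ _ _ (fun x => P (- x) *m X *m Q (- x))); last first.
  by move=> x; rewrite !conjm_mul hP hQ hX.
exact: (mxint_refl (F := fun x => P x *m X *m Q x)).
Qed.

End NE.

Section MS.
Variable R : realType.
Local Notation C := (R[i]).

Lemma ctr_scaleC a b (c : C) (X : 'M[C]_(a, b)) : ctr (c *: X) = conjc c *: ctr X.
Proof.
apply/matrixP => i j; rewrite /ctr !mxE; case: c => u v; case: (X j i) => u' v'.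
by apply/eqP; rewrite eq_complex /=; apply/andP; split; apply/eqP; ring.
Qed.

Lemma ctr_scaleR a b (c : R) (X : 'M[C]_(a, b)) : ctr (c%:C *: X) = c%:C *: ctr X.
Proof. by rewrite ctr_scaleC conjcR. Qed.

Lemma T_form na nb m p (Aa : 'M[R]_na) (Ba : 'M[R]_(na, m)) (Ca : 'M[R]_(p, na))
  (Ab : 'M[R]_nb) (Bb : 'M[R]_(nb, m)) (Cb : 'M[R]_(p, nb)) (s : C) :
  ctr (tf1 Aa Ba Ca s) *m tf1 Ab Bb Cb s =
  cmx Ba^T *m (ctr (resolvent Aa s) *m cmx (Ca^T *m Cb) *m resolvent Ab s) *m cmx Bb.
Proof. by rewrite /tf1 !ctr_mul !ctr_cmx cmx_mul !mulmxA. Qed.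

Lemma S_form na nb m p (Aa : 'M[R]_na) (Ba : 'M[R]_(na, m)) (Ma : 'I_p -> 'M[R]_na)
  (Ab : 'M[R]_nb) (Bb : 'M[R]_(nb, m)) (Mb : 'I_p -> 'M[R]_nb) i (s1 s2 : C) :
  (Ma i)^T = Ma i ->
  ctr (tf2 Aa Ba Ma i s1 s2) *m tf2 Ab Bb Mb i s1 s2 =
  (cmx Ba^T *m ctr (resolvent Aa s2) *m cmx (Ma i))
  *m (resolvent Aa s1 *m cmx (Ba *m Bb^T) *m ctr (resolvent Ab s1))
  *m (cmx (Mb i) *m resolvent Ab s2 *m cmx Bb).
Proof. by move=> MS; rewrite /tf2 !ctr_mul !ctr_cmx ctrK trmxK MS cmx_mul !mulmxA. Qed.

Variable w : R.

Lemma S_sep na nb m p (Aa : 'M[R]_na) (Ba : 'M[R]_(na, m)) (Ma : 'I_p -> 'M[R]_na)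
  (Ab : 'M[R]_nb) (Bb : 'M[R]_(nb, m)) (Mb : 'I_p -> 'M[R]_nb) :
  hurwitz Aa -> hurwitz Ab -> (forall i, (Ma i)^T = Ma i) ->
  mgood2 w (S2 (fun i x1 x2 => tf2 Aa Ba Ma i (jw x1) (jw x2))
               (fun i x1 x2 => tf2 Ab Bb Mb i (jw x1) (jw x2))) /\
  mxintegral2 w (S2 (fun i x1 x2 => tf2 Aa Ba Ma i (jw x1) (jw x2))
               (fun i x1 x2 => tf2 Ab Bb Mb i (jw x1) (jw x2)))
  = mxintegral w (fun x2 => \sum_(i < p)
      (cmx Ba^T *m ctr (resolvent Aa (jw x2)) *m cmx (Ma i))
      *m mxintegral w (fun x1 => resolvent Aa (jw x1) *m cmx (Ba *m Bb^T) *m ctr (resolvent Ab (jw x1)))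
      *m (cmx (Mb i) *m resolvent Ab (jw x2) *m cmx Bb)).
Proof.
move=> ha hb MS.
have ca := mcc_res ha; have cb := mcc_res hb.
have cL : forall i, mcc (fun x2 => cmx Ba^T *m ctr (resolvent Aa (jw x2)) *m cmx (Ma i)).
  move=> i; apply: mcc_mul; last exact: mcc_cst.
  by apply: mcc_mul; [exact: mcc_cst | exact: mcc_ctr].
have cU : mcc (fun x1 => resolvent Aa (jw x1) *m cmx (Ba *m Bb^T) *m ctr (resolvent Ab (jw x1))).
  by apply: mcc_mul; [apply: mcc_mul => //; exact: mcc_cst | exact: mcc_ctr].
have cK : forall i, mcc (fun x2 => cmx (Mb i) *m resolvent Ab (jw x2) *m cmx Bb).
  move=> i; apply: mcc_mul; last exact: mcc_cst.
  by apply: mcc_mul => //; exact: mcc_cst.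
have [g e] := mxint2_sep w cL cU cK.
have E : forall x1 x2, S2 (fun i x1 x2 => tf2 Aa Ba Ma i (jw x1) (jw x2))
               (fun i x1 x2 => tf2 Ab Bb Mb i (jw x1) (jw x2)) x1 x2 =
  \sum_(i < p) (cmx Ba^T *m ctr (resolvent Aa (jw x2)) *m cmx (Ma i))
      *m (resolvent Aa (jw x1) *m cmx (Ba *m Bb^T) *m ctr (resolvent Ab (jw x1)))
      *m (cmx (Mb i) *m resolvent Ab (jw x2) *m cmx Bb).
  by move=> x1 x2; rewrite /S2; apply: eq_bigr => i _; rewrite S_form.
split; first by apply: (mgood2_ext (fun x y => esym (E x y))).
by rewrite (mxint2_ext w E).
Qed.

End MS.

Lemma jw_conj (R : realType) (x : R) : conjc (jw x) + jw x = 0.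
Proof. by apply/eqP; rewrite eq_complex /= addr0 addNr !eqxx. Qed.
Lemma jw_conj' (R : realType) (x : R) : jw x + conjc (jw x) = 0.
Proof. by rewrite addrC jw_conj. Qed.

Local Opaque mxintegral mxintegral2 cintegral cintegral2.

Theorem corollary1 (R : realType) (n k m p : nat)
  (A : 'M[R]_n) (B : 'M[R]_(n, m)) (Cm : 'M[R]_(p, n)) (M : 'I_p -> 'M[R]_n)
  (Ak : 'M[R]_k) (Bk : 'M[R]_(k, m)) (Ck : 'M[R]_(p, k)) (Mk : 'I_p -> 'M[R]_k)
  (w : R) (P12 Y12 Z12 : 'M[R[i]]_(n, k)) :
  0 < w ->
  hurwitz A -> hurwitz Ak ->
  (forall i, (M i)^T = M i) -> (forall i, (Mk i)^T = Mk i) ->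
  cmx A *m P12 + P12 *m cmx Ak^T
    + Fw w A *m cmx (B *m Bk^T) + cmx (B *m Bk^T) *m ctr (Fw w Ak) = 0 ->
  cmx A^T *m Y12 + Y12 *m cmx Ak
    + ctr (Fw w A) *m cmx (Cm^T *m Ck) + cmx (Cm^T *m Ck) *m Fw w Ak = 0 ->
  cmx A^T *m Z12 + Z12 *m cmx Ak
    + \sum_(i < p) (ctr (Fw w A) *m cmx (M i) *m P12 *m cmx (Mk i)
                    + cmx (M i) *m P12 *m cmx (Mk i) *m Fw w Ak) = 0 ->
  let G1  := fun nu : R => tf1 A B Cm (jw nu) in
  let G2  := fun (i : 'I_p) (nu1 nu2 : R) => tf2 A B M i (jw nu1) (jw nu2) in
  let Gk1 := fun nu : R => tf1 Ak Bk Ck (jw nu) in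
  let Gk2 := fun (i : 'I_p) (nu1 nu2 : R) => tf2 Ak Bk Mk i (jw nu1) (jw nu2) in
  let Q12 := Y12 + Z12 in
  h2w_norm2 w (fun nu => G1 nu - Gk1 nu) (fun i nu1 nu2 => G2 i nu1 nu2 - Gk2 i nu1 nu2)
    = h2w_norm2 w G1 G2 - 2 * h2w_inner w G1 Gk1 G2 Gk2 + h2w_norm2 w Gk1 Gk2
  /\ h2w_inner w G1 Gk1 G2 Gk2 = \tr (cmx B^T *m (Y12 + Z12) *m cmx Bk)
  /\ h2w_inner w G1 Gk1 G2 Gk2 = \tr (cmx B^T *m Q12 *m cmx Bk).
Proof.
move=> w0 hA hAk MS MkS EP EY EZ G1 G2 Gk1 Gk2 Q12.
have ww : - w <= w by rewrite (@le_trans _ _ 0) // ?oppr_le0 ltW.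
have cRA := mcc_res hA; have cRK := mcc_res hAk.
set c1 : R := (2 * pi)^-1.
have FA : Fw w A = c1%:C *: mxintegral w (fun x => resolvent A (jw x)) by [].
have FK : Fw w Ak = c1%:C *: mxintegral w (fun x => resolvent Ak (jw x)) by [].
have cFA : ctr (Fw w A) = c1%:C *: mxintegral w (fun x => ctr (resolvent A (jw x))).
  by rewrite FA ctr_scaleR (mxint_ctr w cRA).
have cFK : ctr (Fw w Ak) = c1%:C *: mxintegral w (fun x => ctr (resolvent Ak (jw x))).
  by rewrite FK ctr_scaleR (mxint_ctr w cRK).
have hAT : hurC (cmx A^T) by rewrite cmx_tr; exact: hurC_tr.
have hAkT : hurC (cmx Ak^T) by rewrite cmx_tr; exact: hurC_tr.
have hRA : forall x, cmx A *m resolvent A (jw x) = jw x *: resolvent A (jw x) - 1%:M.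
  by move=> x; exact: res_left.
have hRK : forall x, resolvent Ak (jw x) *m cmx Ak = jw x *: resolvent Ak (jw x) - 1%:M.
  by move=> x; exact: res_right.
have hRAc : forall x, cmx A^T *m ctr (resolvent A (jw x))
                      = conjc (jw x) *: ctr (resolvent A (jw x)) - 1%:M.
  move=> x; have := congr1 (@ctr R _ _) (@res_right _ _ A (jw x) hA erefl).
  by rewrite ctr_mul ctr_cmx ctr_sub ctr_scaleC ctr1.
have hRKc : forall x, ctr (resolvent Ak (jw x)) *m cmx Ak^T
                      = conjc (jw x) *: ctr (resolvent Ak (jw x)) - 1%:M.
  move=> x; have := congr1 (@ctr R _ _) (@res_left _ _ Ak (jw x) hAk erefl).
  by rewrite ctr_mul ctr_cmx ctr_sub ctr_scaleC ctr1.
have Ysol := sylv_gen w (cmx (Cm^T *m Ck)) c1%:C (mcc_ctr cRA) cRK hRAc hRK (@jw_conj R).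
rewrite cFA FK in EY.
have HY := sylv_eq hAT hAk EY Ysol.
have Psol := sylv_gen w (cmx (B *m Bk^T)) c1%:C cRA (mcc_ctr cRK) hRA hRKc (@jw_conj' R).
rewrite FA cFK in EP.
have HP := sylv_eq hA hAkT EP Psol.
set XZ := \sum_(i < p) cmx (M i) *m P12 *m cmx (Mk i).
have EZ' : cmx A^T *m Z12 + Z12 *m cmx Ak + ctr (Fw w A) *m XZ + XZ *m Fw w Ak = 0.
  rewrite -[RHS]EZ -addrA big_split /= mulmx_sumr mulmx_suml.
  by congr (_ + (_ + _)); apply: eq_bigr => i _; rewrite !mulmxA.
have Zsol := sylv_gen w XZ c1%:C (mcc_ctr cRA) cRK hRAc hRK (@jw_conj R).
rewrite cFA FK in EZ'.
have HZ := sylv_eq hAT hAk EZ' Zsol.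
have rY : conjm Y12 = Y12.
  rewrite HY; apply: (@conjm_int3 R w _ _ (fun x => ctr (resolvent A (jw x)))
     (fun x => resolvent Ak (jw x)) (cmx (Cm^T *m Ck)) c1 ww (mcc_ctr cRA) cRK).
  - by move=> x; rewrite conjm_ctr conjm_res.
  - by move=> x; rewrite conjm_res.
  - exact: conjm_cmx.
have rP : conjm P12 = P12.
  rewrite HP; apply: (@conjm_int3 R w _ _ (fun x => resolvent A (jw x))
     (fun x => ctr (resolvent Ak (jw x))) (cmx (B *m Bk^T)) c1 ww cRA (mcc_ctr cRK)).
  - by move=> x; rewrite conjm_res.
  - by move=> x; rewrite conjm_ctr conjm_res.
  - exact: conjm_cmx.
have rZ : conjm Z12 = Z12.
  rewrite HZ; apply: (@conjm_int3 R w _ _ (fun x => ctr (resolvent A (jw x)))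
     (fun x => resolvent Ak (jw x)) XZ c1 ww (mcc_ctr cRA) cRK).
  - by move=> x; rewrite conjm_ctr conjm_res.
  - by move=> x; rewrite conjm_res.
  - rewrite /XZ conjm_sum; apply: eq_bigr => i _.
    by rewrite !conjm_mul !conjm_cmx rP.
have cG1 : mcc G1.
  rewrite /G1 /tf1; apply: mcc_mul; [apply: mcc_mul => //; exact: mcc_cst | exact: mcc_cst].
have cGk1 : mcc Gk1.
  rewrite /Gk1 /tf1; apply: mcc_mul; [apply: mcc_mul => //; exact: mcc_cst | exact: mcc_cst].
have cWY : mcc (fun x => ctr (resolvent A (jw x)) *m cmx (Cm^T *m Ck) *m resolvent Ak (jw x)).
  by apply: mcc_mul => //; apply: mcc_mul; [exact: mcc_ctr | exact: mcc_cst].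
have cWZ : mcc (fun x => ctr (resolvent A (jw x)) *m XZ *m resolvent Ak (jw x)).
  by apply: mcc_mul => //; apply: mcc_mul; [exact: mcc_ctr | exact: mcc_cst].
have T1 : cintegral w (fun nu => \tr (ctr (G1 nu) *m Gk1 nu)) =
  \tr (cmx B^T *m mxintegral w (fun x => ctr (resolvent A (jw x)) *m cmx (Cm^T *m Ck) *m resolvent Ak (jw x)) *m cmx Bk).
  rewrite -(mxint_tr w (mcc_T cG1 cGk1)).
  rewrite (@mxint_ext _ w _ _ (fun nu => ctr (G1 nu) *m Gk1 nu)
    (fun x => cmx B^T *m (ctr (resolvent A (jw x)) *m cmx (Cm^T *m Ck) *m resolvent Ak (jw x)) *m cmx Bk)
    (fun x => T_form A B Cm Ak Bk Ck (jw x))).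
  rewrite (mxint_mulr w); last by apply: mcc_mul => //; exact: mcc_cst.
  by rewrite (mxint_mull w).
have [gGGk JGGk] := @S_sep R w n k m p A B M Ak Bk Mk hA hAk MS.
set IU := mxintegral w (fun x1 => resolvent A (jw x1) *m cmx (B *m Bk^T) *m ctr (resolvent Ak (jw x1))).
have cLi : forall i, mcc (fun x2 => cmx B^T *m ctr (resolvent A (jw x2)) *m cmx (M i)).
  move=> i; apply: mcc_mul; last exact: mcc_cst.
  by apply: mcc_mul; [exact: mcc_cst | exact: mcc_ctr].
have cKi : forall i, mcc (fun x2 => cmx (Mk i) *m resolvent Ak (jw x2) *m cmx Bk).
  move=> i; apply: mcc_mul; last exact: mcc_cst.
  by apply: mcc_mul => //; exact: mcc_cst.
have cJ : mcc (fun x2 => \sum_(i < p) (cmx B^T *m ctr (resolvent A (jw x2)) *m cmx (M i))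
      *m IU *m (cmx (Mk i) *m resolvent Ak (jw x2) *m cmx Bk)).
  apply: mcc_sum => i _; apply: mcc_mul => //; apply: mcc_mul => //; exact: mcc_cst.
have J2 : c1%:C *: mxintegral w (fun x2 => \sum_(i < p) (cmx B^T *m ctr (resolvent A (jw x2)) *m cmx (M i))
      *m IU *m (cmx (Mk i) *m resolvent Ak (jw x2) *m cmx Bk))
  = cmx B^T *m mxintegral w (fun x => ctr (resolvent A (jw x)) *m XZ *m resolvent Ak (jw x)) *m cmx Bk.
  rewrite -(mxint_scale w _ cJ).
  rewrite (@mxint_ext _ w _ _ _
    (fun x => cmx B^T *m (ctr (resolvent A (jw x)) *m XZ *m resolvent Ak (jw x)) *m cmx Bk)); last first.
    move=> x; rewrite scaler_sumr /XZ !(mulmx_sumr, mulmx_suml); apply: eq_bigr => i _.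
    by rewrite scalemxAl scalemxAr -HP !mulmxA.
  rewrite (mxint_mulr w); last by apply: mcc_mul => //; exact: mcc_cst.
  by rewrite (mxint_mull w).
have c2E : ((((2 * pi) ^+ 2)^-1)%:C : R[i]) = c1%:C * c1%:C.
  rewrite -exprVn expr2 -/c1.
  by apply/eqP; rewrite eq_complex /=; apply/andP; split; apply/eqP; ring.
have Hin : h2w_inner w G1 Gk1 G2 Gk2 = \tr (cmx B^T *m (Y12 + Z12) *m cmx Bk).
  rewrite /h2w_inner T1 JGGk c2E -mulrA -/IU -!mxtraceZ J2.
  have e1 : ((2 * pi)^-1)%:C *: (cmx B^T *m mxintegral w (fun x => ctr (resolvent A (jw x)) *m cmx (Cm^T *m Ck) *m resolvent Ak (jw x)) *m cmx Bk)
    = cmx B^T *m Y12 *m cmx Bk by rewrite HY scalemxAl scalemxAr.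
  have e2 : c1%:C *: (cmx B^T *m mxintegral w (fun x => ctr (resolvent A (jw x)) *m XZ *m resolvent Ak (jw x)) *m cmx Bk)
    = cmx B^T *m Z12 *m cmx Bk by rewrite HZ scalemxAl scalemxAr.
  rewrite -mxtraceD. congr (\tr _).
  rewrite mulmxDr mulmxDl -e1 -e2.
  reflexivity.
have [gGG _] := @S_sep R w n n m p A B M A B M hA hA MS.
have [gGkGk _] := @S_sep R w k k m p Ak Bk Mk Ak Bk Mk hAk hAk MkS.
have NE := @norm_expand R w m p G1 Gk1 G2 Gk2 cG1 cGk1 gGG gGGk gGkGk.
have trc : forall a (X : 'M[R[i]]_a), conjc (\tr X) = \tr (conjm X).
  by move=> a X; rewrite tr_conjm.
have rI : conjc (h2w_inner w G1 Gk1 G2 Gk2) = h2w_inner w G1 Gk1 G2 Gk2.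
  by rewrite Hin trc !conjm_mul conjm_add rY rZ !conjm_cmx.
split; last by split; [exact: Hin | exact: Hin].
rewrite NE rI -mulr2n mulr_natl.
done.
Qed.
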